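(* Assume parts (i), (iv), (v) of Assumption (S), $\ell\ge2$, and $\ell h\,(L_{f;\mathsf{x}}+g_{\max}^2L_{\mathsf{sc},*})\le1$. For $k\in\{1,\dots,T/h\}$ let $\Phi_k:\mathbb{R}^d\to\mathbb{R}^d$ be the one-step sampler map $\widetilde{x}_{kh}\mapsto\widetilde{x}_{(k-1)h}$. Then there is an absolute constant $C$ such that for every $k$ the map $x\mapsto(\Phi_k(x)-x)/h$ is $C\,(L_{f;\mathsf{x}}+g_{\max}^2L_{\mathsf{sc},T-kh})$-Lipschitz. (Equivalently, the drift $\mu'_{T-kh}(x)=(\Phi_k(x)-x)/h$ of the time-reversed interpolated sampler is $O(L_{f;\mathsf{x}}+g_{\max}^2L_{\mathsf{sc},T-kh})$-Lipschitz.)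
   Context: Forward process: $dx_t=f_t(x_t)\,dt+g(t)\,dW_t$ on $\mathbb{R}^d$ with $g(t)>0$; $q_t$ is the law of $x_t$ (smooth positive density), $T>0$, $q^\leftarrow_t\triangleq q_{T-t}$. Assumption (S) parts: (i) $f_t(x)$ is $L_{f;\mathsf{x}}$-Lipschitz in $x$; (iv) $g(t)\le g_{\max}$; (v) $\nabla\ln q^\leftarrow_t$ is $L_{\mathsf{sc},t}$-Lipschitz, $L_{\mathsf{sc},*}=\sup_tL_{\mathsf{sc},t}$. Restoration operator: $R_{t\to s}(x)\triangleq x-(t-s)f_t(x)+(t-s)g(t)^2\nabla\ln q_t(x)$. Degradation operator: $D^\gamma_{s\to t}(x)\triangleq x+(t-s)f_s(x)+g(s)\sqrt{t-s}\,\gamma$. Sampler step (with $h>0$, $T/h\in\mathbb{N}$, $\ell\in\mathbb{N}$): for $k\ge\ell$, $\Phi_k(x)=D^\gamma_{(k-\ell)h\to(k-1)h}(z)$ where $z=R_{kh\to(k-\ell)h}(x)$ and $\gamma=(x-z-\ell hf_{(k-\ell)h}(z))/(g((k-\ell)h)\sqrt{\ell h})$; for $k<\ell$, $\Phi_k(x)=x-h(f_{kh}(x)-\tfrac12g(kh)^2\nabla\ln q_{kh}(x))$. *)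

(* Defs.v *)
From HB Require Import structures.
From mathcomp Require Import all_boot all_order all_algebra.
From mathcomp Require Import all_classical all_reals all_analysis.
Set Implicit Arguments. Unset Strict Implicit. Unset Printing Implicit Defensive.
Import Order.TTheory GRing.Theory Num.Theory.
Import numFieldNormedType.Exports.
Local Open Scope ring_scope.

Section Defs.
Variables (R : realType) (d : nat).

Definition eucl_norm (v : 'rV[R]_d) : R := Num.sqrt (\sum_(i < d) (v 0 i) ^+ 2).

Definition lip_eucl (F : 'rV[R]_d -> 'rV[R]_d) (L : R) : Prop :=
  forall x y, eucl_norm (F x - F y) <= L * eucl_norm (x - y).

Definition score_fn (q : R -> 'rV[R]_d -> R) (t : R) (x : 'rV[R]_d) : 'rV[R]_d :=
  \row_(i < d) 'D_(delta_mx 0 i) (fun y => ln (q t y)) x.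

Definition restoration (f : R -> 'rV[R]_d -> 'rV[R]_d) (g : R -> R)
  (q : R -> 'rV[R]_d -> R) (t s : R) (x : 'rV[R]_d) : 'rV[R]_d :=
  x - (t - s) *: f t x + ((t - s) * g t ^+ 2) *: score_fn q t x.

Definition degradation (f : R -> 'rV[R]_d -> 'rV[R]_d) (g : R -> R)
  (s t : R) (gam x : 'rV[R]_d) : 'rV[R]_d :=
  x + (t - s) *: f s x + (g s * Num.sqrt (t - s)) *: gam.

Definition sampler_step (f : R -> 'rV[R]_d -> 'rV[R]_d) (g : R -> R)
  (q : R -> 'rV[R]_d -> R) (h : R) (ell k : nat) (x : 'rV[R]_d) : 'rV[R]_d :=
  if (ell <= k)%N then
    let s := (k - ell)%:R * h in
    let z := restoration f g q (k%:R * h) s x in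
    let gam := (g s * Num.sqrt (ell%:R * h))^-1 *: (x - z - (ell%:R * h) *: f s z) in
    degradation f g s ((k - 1)%:R * h) gam z
  else
    x - h *: (f (k%:R * h) x - (2^-1 * g (k%:R * h) ^+ 2) *: score_fn q (k%:R * h) x).

End Defs.

(* Main.v *)
Require Import Defs.
From HB Require Import structures.
From mathcomp Require Import all_boot all_order all_algebra.
From mathcomp Require Import all_classical all_reals all_analysis.
From mathcomp Require Import ring lra.
Import Order.TTheory GRing.Theory Num.Theory.
Import numFieldNormedType.Exports.
Local Open Scope ring_scope.

Section Norm.
Variables (R : realType) (d : nat).
Implicit Types (u v : 'rV[R]_d).

Lemma en_ge0 v : 0 <= eucl_norm v.
Proof. exact: sqrtr_ge0. Qed.

Lemma sq_ge0 v : 0 <= \sum_(i < d) (v 0 i) ^+ 2.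
Proof. by apply: sumr_ge0 => i _; exact: sqr_ge0. Qed.

Lemma en_sq v : eucl_norm v ^+ 2 = \sum_(i < d) (v 0 i) ^+ 2.
Proof. by rewrite /eucl_norm sqr_sqrtr // sq_ge0. Qed.

Lemma en_eq0 v : eucl_norm v = 0 -> v = 0.
Proof.
move=> /eqP; rewrite sqrtr_eq0 => hle.
have h0 : \sum_(i < d) (v 0 i) ^+ 2 = 0 by apply/le_anti; rewrite hle sq_ge0.
apply/rowP => i; rewrite mxE.
have := psumr_eq0P (fun i _ => sqr_ge0 (v 0 i)) h0 (i:=i) isT.
by move/eqP; rewrite sqrf_eq0 => /eqP.
Qed.

Lemma en_Z (a : R) v : eucl_norm (a *: v) = `|a| * eucl_norm v.
Proof.
rewrite /eucl_norm.
have -> : \sum_(i < d) ((a *: v) 0 i) ^+ 2 = a ^+ 2 * \sum_(i < d) (v 0 i) ^+ 2.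
  by rewrite mulr_sumr; apply: eq_bigr => i _; rewrite mxE exprMn.
by rewrite sqrtrM ?sqr_ge0 // sqrtr_sqr.
Qed.

Lemma cs u v : \sum_(i < d) (u 0 i * v 0 i) <= eucl_norm u * eucl_norm v.
Proof.
set a := eucl_norm u; set c := eucl_norm v.
have ha : 0 <= a := en_ge0 u. have hc : 0 <= c := en_ge0 v.
have [a0|apos] := eqVneq a 0.
  move/en_eq0: a0 => ->; rewrite big1 ?mulr_ge0 // => i _; rewrite mxE mul0r //.
have [c0|cpos] := eqVneq c 0.
  move/en_eq0: c0 => ->; rewrite big1 ?mulr_ge0 // => i _; rewrite mxE mulr0 //.
have key : 2 * a * c * \sum_(i < d) (u 0 i * v 0 i) <=
    c ^+ 2 * \sum_(i < d) (u 0 i) ^+ 2 + a ^+ 2 * \sum_(i < d) (v 0 i) ^+ 2.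
  rewrite !mulr_sumr -big_split /=; apply: ler_sum => i _.
  have := sqr_ge0 (c * u 0 i - a * v 0 i); nra.
move: key; rewrite -!en_sq -/a -/c => key.
have ap : 0 < a by rewrite lt_neqAle eq_sym apos ha.
have cp : 0 < c by rewrite lt_neqAle eq_sym cpos hc.
have acp : 0 < a * c by apply: mulr_gt0.
nra.
Qed.

Lemma en_D u v : eucl_norm (u + v) <= eucl_norm u + eucl_norm v.
Proof.
have h1 : eucl_norm (u + v) ^+ 2 <= (eucl_norm u + eucl_norm v) ^+ 2.
  rewrite en_sq sqrrD !en_sq -mulr_natr.
  have -> : \sum_(i < d) ((u + v) 0 i) ^+ 2 = \sum_(i < d) (u 0 i) ^+ 2
      + 2 * \sum_(i < d) (u 0 i * v 0 i) + \sum_(i < d) (v 0 i) ^+ 2.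
    rewrite mulr_sumr -!big_split /=; apply: eq_bigr => i _.
    rewrite mxE; ring.
  have := cs u v; lra.
have := en_ge0 (u + v); have := en_ge0 u; have := en_ge0 v; nra.
Qed.

Lemma en_B u v : eucl_norm (u - v) <= eucl_norm u + eucl_norm v.
Proof. by have := en_D u (- v); rewrite -scaleN1r en_Z normrN normr1 mul1r. Qed.


Lemma lipP (F : 'rV[R]_d -> 'rV[R]_d) L : lip_eucl F L -> forall x y,
  eucl_norm (F x - F y) <= L * eucl_norm (x - y).
Proof. by move=> H; apply: H. Qed.

Lemma big_case (f : R -> 'rV[R]_d -> 'rV[R]_d) (g : R -> R) (q : R -> 'rV[R]_d -> R)
  (t s r h l Lf Ls gmax : R) (x y : 'rV[R]_d) :
  0 < h -> 0 < g s -> 0 < g t -> g t <= gmax -> 1 <= l ->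
  t - s = l * h -> r - s = (l - 1) * h ->
  l * h * (Lf + gmax ^+ 2 * Ls) <= 1 -> 0 <= Lf -> 0 <= Ls ->
  lip_eucl (f t) Lf -> lip_eucl (f s) Lf -> lip_eucl (score_fn q t) Ls ->
  eucl_norm (h^-1 *: (degradation f g s r
     ((g s * Num.sqrt (l * h))^-1 *: (x - restoration f g q t s x - (l * h) *: f s (restoration f g q t s x)))
     (restoration f g q t s x) - x)
   - h^-1 *: (degradation f g s r
     ((g s * Num.sqrt (l * h))^-1 *: (y - restoration f g q t s y - (l * h) *: f s (restoration f g q t s y)))
     (restoration f g q t s y) - y))
  <= 3 * (Lf + gmax ^+ 2 * Ls) * eucl_norm (x - y).
Proof.
move=> hp gsp gtp gtm l1 ets ers hP Lf0 Ls0 Hft Hfs HS.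
set zx := restoration f g q t s x; set zy := restoration f g q t s y.
set c := Num.sqrt (r - s) / Num.sqrt (l * h).
have lhp : 0 < l * h by apply: mulr_gt0 => //; lra.
have sq0 : Num.sqrt (l * h) != 0 by rewrite sqrtr_eq0 -ltNge.
have gs0 : g s != 0 by rewrite gt_eqF.
have h0 : h != 0 by rewrite gt_eqF.
have E1 : h^-1 *: (degradation f g s r
     ((g s * Num.sqrt (l * h))^-1 *: (x - zx - (l * h) *: f s zx)) zx - x)
   - h^-1 *: (degradation f g s r
     ((g s * Num.sqrt (l * h))^-1 *: (y - zy - (l * h) *: f s zy)) zy - y)
   = ((1 - c) / h) *: (zx - x - (zy - y)) + (((r - s) - c * (l * h)) / h) *: (f s zx - f s zy).
  apply/rowP => i; rewrite /degradation /c !mxE; field.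
  by rewrite sq0 gs0 h0.
have E2 : zx - x - (zy - y) = (- (l * h)) *: (f t x - f t y)
    + (l * h * g t ^+ 2) *: (score_fn q t x - score_fn q t y).
  by apply/rowP => i; rewrite /zx /zy /restoration ets !mxE; ring.
have E3 : zx - zy = (x - y) + (zx - x - (zy - y)).
  by apply/rowP => i; rewrite !mxE; ring.
set n := eucl_norm (x - y).
have n0 : 0 <= n by exact: en_ge0.
set K := Lf + g t ^+ 2 * Ls.
have gt2 : g t ^+ 2 <= gmax ^+ 2 by rewrite lerXn2r // ?nnegrE; lra.
have KK : K <= Lf + gmax ^+ 2 * Ls by rewrite /K lerD2l ler_wpM2r.
have K0 : 0 <= K by rewrite /K addr_ge0 // mulr_ge0 // sqr_ge0.
have lhK : l * h * K <= 1.
  apply: le_trans hP; rewrite ler_wpM2l //; lra.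
have ND : eucl_norm (zx - x - (zy - y)) <= l * h * K * n.
  rewrite E2; apply: le_trans (en_D _ _) _; rewrite !en_Z.
  have := Hft x y; have := HS x y; rewrite -/n.
  rewrite normrN !ger0_norm ?mulr_ge0 ?sqr_ge0 //; try lra.
  move=> a b; rewrite /K.
  have := ler_wpM2l (ltW lhp) b.
  have := ler_wpM2l (mulr_ge0 (ltW lhp) (sqr_ge0 (g t))) a.
  lra.
have Nz : eucl_norm (zx - zy) <= n + l * h * K * n.
  rewrite E3; apply: le_trans (en_D _ _) _; rewrite -/n; lra.
have Nf : eucl_norm (f s zx - f s zy) <= Lf * (n + l * h * K * n).
  apply: le_trans (Hfs zx zy) _; exact: ler_wpM2l.
have rs0 : 0 <= r - s by rewrite ers mulr_ge0 //; lra.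
have c0 : 0 <= c by rewrite /c divr_ge0 ?sqrtr_ge0.
have c2 : c ^+ 2 * (l * h) = r - s.
  rewrite /c expr_div_n !sqr_sqrtr //; last lra.
  by rewrite mulfVK // gt_eqF.
have c1 : c <= 1.
  have : c ^+ 2 <= 1.
    have : c ^+ 2 * (l * h) <= 1 * (l * h) by rewrite c2 mul1r ers; nra.
    by rewrite ler_pM2r.
  by move=> H; nra.
have A0 : 0 <= (1 - c) / h by rewrite divr_ge0 //; lra.
have Alh : (1 - c) / h * (l * h) <= 1.
  have -> : (1 - c) / h * (l * h) = (1 - c) * l by field.
  have : c ^+ 2 * l = l - 1.
    by apply: (mulIf h0); rewrite -mulrA c2 ers.
  nra.
have B1 : `|(r - s - c * (l * h)) / h| <= 1.
  have -> : (r - s - c * (l * h)) / h = (l - 1) - c * l.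
    by rewrite ers; field.
  have : c ^+ 2 * l = l - 1.
    apply: (mulIf h0); rewrite -mulrA c2 ers //.
  move=> e; rewrite ler_norml; apply/andP; split; nra.
rewrite E1; apply: le_trans (en_D _ _) _; rewrite !en_Z (ger0_norm A0).
have T1 : (1 - c) / h * eucl_norm (zx - x - (zy - y)) <= K * n.
  apply: le_trans (ler_wpM2l A0 ND) _.
  have : (1 - c) / h * (l * h) * (K * n) <= 1 * (K * n) by rewrite ler_wpM2r ?mulr_ge0.
  by rewrite mul1r !mulrA.
have T2 : `|(r - s - c * (l * h)) / h| * eucl_norm (f s zx - f s zy) <= Lf * (2 * n).
  apply: le_trans (ler_wpM2l (normr_ge0 _) Nf) _.
  have : Lf * (n + l * h * K * n) <= Lf * (2 * n).
    by rewrite ler_wpM2l //; nra.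
  have : 0 <= Lf * (n + l * h * K * n) by rewrite mulr_ge0 // addr_ge0 // !mulr_ge0 //; lra.
  nra.
have : K * n <= (Lf + gmax ^+ 2 * Ls) * n by rewrite ler_wpM2r.
have : 0 <= gmax ^+ 2 * Ls * n by apply: mulr_ge0 => //; apply: mulr_ge0 => //; exact: sqr_ge0.
lra.
Qed.

End Norm.

Section S.
Variables (R : realType) (d : nat).
Lemma small_case (f : R -> 'rV[R]_d -> 'rV[R]_d) (g : R -> R) (q : R -> 'rV[R]_d -> R)
  (t h Lf Ls gmax : R) (x y : 'rV[R]_d) :
  0 < h -> 0 < g t -> g t <= gmax -> 0 <= Lf -> 0 <= Ls ->
  lip_eucl (f t) Lf -> lip_eucl (score_fn q t) Ls ->
  eucl_norm (h^-1 *: (x - h *: (f t x - (2^-1 * g t ^+ 2) *: score_fn q t x) - x)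
   - h^-1 *: (y - h *: (f t y - (2^-1 * g t ^+ 2) *: score_fn q t y) - y))
  <= 3 * (Lf + gmax ^+ 2 * Ls) * eucl_norm (x - y).
Proof.
move=> hp gtp gtm Lf0 Ls0 Hft HS.
have h0 : h != 0 by rewrite gt_eqF.
have -> : h^-1 *: (x - h *: (f t x - (2^-1 * g t ^+ 2) *: score_fn q t x) - x)
   - h^-1 *: (y - h *: (f t y - (2^-1 * g t ^+ 2) *: score_fn q t y) - y)
   = (-1) *: (f t x - f t y) + (2^-1 * g t ^+ 2) *: (score_fn q t x - score_fn q t y).
  by apply/rowP => i; rewrite !mxE; field.
set n := eucl_norm (x - y).
have n0 : 0 <= n by exact: en_ge0.
apply: le_trans (en_D _ _ _ _) _; rewrite !en_Z normrN1 mul1r.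
rewrite ger0_norm; last by rewrite mulr_ge0 ?sqr_ge0 // invr_ge0.
have gt2 : g t ^+ 2 <= gmax ^+ 2 by rewrite lerXn2r // ?nnegrE; lra.
have a := Hft x y; have b := HS x y; rewrite -/n in a b.
have : 2^-1 * g t ^+ 2 * eucl_norm (score_fn q t x - score_fn q t y)
   <= 2^-1 * g t ^+ 2 * (Ls * n).
  by apply: ler_wpM2l => //; rewrite mulr_ge0 ?sqr_ge0 // invr_ge0.
have : g t ^+ 2 * (Ls * n) <= gmax ^+ 2 * (Ls * n) by rewrite ler_wpM2r ?mulr_ge0.
have : 0 <= gmax ^+ 2 * (Ls * n) by rewrite mulr_ge0 ?sqr_ge0 ?mulr_ge0.
have : 0 <= Lf * n by rewrite mulr_ge0.
have : 0 <= g t ^+ 2 * (Ls * n) by rewrite mulr_ge0 ?sqr_ge0 ?mulr_ge0.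
rewrite !mulrA; lra.
Qed.

End S.
Theorem mainTheorem11 (R : realType) :
  exists C : R,
  forall (d : nat) (f : R -> 'rV[R]_d -> 'rV[R]_d) (g : R -> R)
    (q : R -> 'rV[R]_d -> R) (T h : R) (N ell : nat)
    (Lf gmax Lstar : R) (Lsc : R -> R),
    0 < h -> 0 < T -> T = N%:R * h ->
    (* (i) *)
    (forall t, 0 <= t <= T -> lip_eucl (f t) Lf) ->
    (* g > 0 and (iv) *)
    (forall t, 0 <= t <= T -> 0 < g t) ->
    (forall t, 0 <= t <= T -> g t <= gmax) ->
    (* q_t smooth positive density (positivity, differentiability) *)
    (forall t x, 0 <= t <= T -> 0 < q t x) ->
    (forall t x, 0 <= t <= T -> differentiable (q t) x) ->
    (* (v): grad ln q^<-_t = grad ln q_{T-t} is Lsc t - Lipschitz, Lstar >= sup Lsc *)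
    (forall t, 0 <= t <= T -> lip_eucl (score_fn q (T - t)) (Lsc t)) ->
    (forall t, 0 <= t <= T -> Lsc t <= Lstar) ->
    (2 <= ell)%N ->
    ell%:R * h * (Lf + gmax ^+ 2 * Lstar) <= 1 ->
    forall k : nat, (1 <= k <= N)%N ->
      lip_eucl (fun x => h^-1 *: (sampler_step f g q h ell k x - x))
        (C * (Lf + gmax ^+ 2 * Lsc (T - k%:R * h))).
Proof.
exists 3 => d f g q T h N ell Lf gmax Lstar Lsc hp Tp TN Hf Hg Hgm _ _ Hsc HLs hell hP k /andP[k1 kN] x y /=.
set n := eucl_norm (x - y).
have n0 : 0 <= n by exact: en_ge0.
have [nz|npos] := eqVneq n 0.
  have exy : x = y by apply/eqP; rewrite -subr_eq0; apply/eqP/en_eq0.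
  rewrite -exy subrr nz mulr0.
  by rewrite /eucl_norm big1 ?sqrtr0 // => i _; rewrite mxE expr0n.
have np : 0 < n by rewrite lt_neqAle eq_sym npos n0.
have hT : forall j : nat, (j <= N)%N -> 0 <= j%:R * h <= T.
  move=> j jN; apply/andP; split; first by rewrite mulr_ge0 // ltW.
  by rewrite TN ler_wpM2r ?ler_nat // ltW.
have ht := hT k kN.
have hTk : 0 <= T - k%:R * h <= T.
  case/andP: ht => a b; apply/andP; split; lra.
have Lf0 : 0 <= Lf.
  have := Hf _ ht x y; rewrite -/n => a.
  have := en_ge0 _ _ (f (k%:R * h) x - f (k%:R * h) y).
  move=> b; have : 0 <= Lf * n by lra.
  by rewrite pmulr_lge0.
have HS : lip_eucl (score_fn q (k%:R * h)) (Lsc (T - k%:R * h)).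
  by have := Hsc _ hTk; rewrite (_ : T - (T - k%:R * h) = k%:R * h) //; ring.
have Ls0 : 0 <= Lsc (T - k%:R * h).
  have := HS x y; rewrite -/n => a.
  have := en_ge0 _ _ (score_fn q (k%:R * h) x - score_fn q (k%:R * h) y).
  move=> b; have : 0 <= Lsc (T - k%:R * h) * n by lra.
  by rewrite pmulr_lge0.
rewrite /n; have [hlk|hlk] := leqP ell k.
  rewrite /sampler_step hlk.
  have hs : 0 <= (k - ell)%:R * h <= T by apply: hT; exact: leq_trans (leq_subr _ _) kN.
  have Hb := @big_case R d f g q (k%:R * h) ((k - ell)%:R * h) ((k - 1)%:R * h) h
     ell%:R Lf (Lsc (T - k%:R * h)) gmax x y hp
     (Hg _ hs) (Hg _ ht) (Hgm _ ht).
  have l1 : 1 <= (ell%:R : R) by rewrite ler1n (leq_trans _ hell).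
  have e1 : k%:R * h - (k - ell)%:R * h = ell%:R * h by rewrite natrB //; ring.
  have e2 : (k - 1)%:R * h - (k - ell)%:R * h = (ell%:R - 1) * h.
    by rewrite !natrB // ?(leq_trans _ hlk) //; ring.
  have e3 : ell%:R * h * (Lf + gmax ^+ 2 * Lsc (T - k%:R * h)) <= 1.
    apply: le_trans hP; apply: ler_wpM2l; first by rewrite mulr_ge0 ?ler0n // ltW.
    by rewrite lerD2l ler_wpM2l ?sqr_ge0 // HLs.
  have := Hb l1 e1 e2 e3 Lf0 Ls0 (Hf _ ht) (Hf _ hs) HS.
  exact.
have hlk' : (ell <= k)%N = false by rewrite leqNgt hlk.
rewrite /sampler_step hlk'.
apply: small_case => //.
- exact: Hg.
- exact: Hgm.
- exact: Hf.
Qed.
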